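(* Let $s\in C$ and let $\hat\kappa$ be a prime broadcast center of $T$ under $s$. Then for every $x\in V(T)\setminus\{\hat\kappa\}$, $$b^s(x,T)=d_{x,\hat\kappa}\cdot\rho+\tilde w^s_{x,\hat\kappa}+b^s(\hat\kappa,\bar T_{\hat\kappa,x}).$$
   Context: $T$ is a finite tree with vertex set $V(T)$, $|V(T)|=n$, and edge set $E(T)$. Each edge $(u,v)$ carries an interval $[w^-_{u,v},w^+_{u,v}]$ of non-negative reals. A scenario $s$ assigns to every edge $(u,v)$ a weight $w^s_{u,v}\in[w^-_{u,v},w^+_{u,v}]$; $C$ is the set of all scenarios. A constant $\rho>0$ is fixed. Broadcast time (postal model): for a subtree $G$ of $T$ and $u\in V(G)$, $b^s(u,G)=0$ if $u$ has no neighbour in $G$; otherwise, if $v_1,\dots,v_h$ are the neighbours of $u$ in $G$ and $G_{v}$ is the component of $G-u$ containing $v$, $b^s(u,G)=\min_{\pi}\max_{1\le k\le h}\big(k\rho+w^s_{u,v_{\pi(k)}}+b^s(v_{\pi(k)},G_{v_{\pi(k)}})\big)$ over permutations $\pi$ of $\{1,\dots,h\}$. $B^s=\{u: b^s(u,T)\le b^s(v,T)\ \forall v\in V(T)\}$. For distinct $x,y$, $T_{x,y}$ is the component of $T-x$ containing $y$, and $\bar T_{x,y}$ is the subtree induced by $V(T)\setminus V(T_{x,y})$. A vertex $\hat\kappa\in B^s$ is a prime broadcast center under $s$ if $b^s(\hat\kappa,\bar T_{\hat\kappa,u})\ge b^s(u,\bar T_{u,\hat\kappa})$ for every neighbour $u$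 of $\hat\kappa$. $P_{x,y}$ is the set of edges of the $x$–$y$ path in $T$, $d_{x,y}=|P_{x,y}|$, and $\tilde w^s_{x,y}=\sum_{(u,v)\in P_{x,y}}w^s_{u,v}$. *)

(* Defs.v *)
From HB Require Import structures.
From mathcomp Require Import all_boot all_order all_algebra.
Set Implicit Arguments.
Unset Strict Implicit.
Unset Printing Implicit Defensive.
Import Order.TTheory GRing.Theory Num.Theory.
Local Open Scope ring_scope.

Definition is_tree (V : finType) (e : rel V) : Prop :=
  [/\ symmetric e, irreflexive e, (forall x y : V, connect e x y) &
      (forall (x : V) (p : seq V),
          path e x p -> last x p = x -> uniq p -> (size p < 3)%N)].

Definition edge_intervals (V : finType) (R : realFieldType) (e : rel V)
  (wl wu : V -> V -> R) : Prop :=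
  (forall u v, wl u v = wl v u) /\ (forall u v, wu u v = wu v u) /\
  (forall u v, e u v -> 0 <= wl u v <= wu u v).

Definition scenario (V : finType) (R : realFieldType) (e : rel V)
  (wl wu w : V -> V -> R) : Prop :=
  (forall u v, w u v = w v u) /\
  (forall u v, e u v -> wl u v <= w u v <= wu u v).

(* Vertices of the component of G - u containing v, where the subtree G is
   given by its vertex set A (induced subgraph). *)
Definition comp (V : finType) (e : rel V) (A : {set V}) (u v : V) : {set V} :=
  [set y in A :\ u |
     connect [rel a b | [&& e a b, a \in A :\ u & b \in A :\ u]] v y].

(* Broadcast time in the postal model, by recursion with fuel n >= #|A|. *)
Fixpoint bcast_aux (V : finType) (R : realFieldType) (e : rel V) (rho : R)
  (w : V -> V -> R) (n : nat) (u : V) (A : {set V}) {struct n} : R :=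
  match n with
  | 0 => 0
  | n'.+1 =>
    let N := [seq v <- enum A | e u v] in
    let cost (p : seq V) : R :=
      \big[Num.max/0]_(i < size p)
        ((i.+1)%:R * rho + w u (nth u p i)
         + bcast_aux e rho w n' (nth u p i) (comp e A u (nth u p i))) in
    \big[Num.min/cost N]_(p <- permutations N) cost p
  end.

Definition bcast (V : finType) (R : realFieldType) (e : rel V) (rho : R)
  (w : V -> V -> R) (u : V) (A : {set V}) : R :=
  bcast_aux e rho w #|A| u A.

Definition Tsub (V : finType) (e : rel V) (x y : V) : {set V} :=
  comp e [set: V] x y.

Definition Tbar (V : finType) (e : rel V) (x y : V) : {set V} :=
  ~: Tsub e x y.

Definition is_broadcast_center (V : finType) (R : realFieldType) (e : rel V)
  (rho : R) (w : V -> V -> R) (u : V) : Prop :=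
  forall v : V, bcast e rho w u [set: V] <= bcast e rho w v [set: V].

Definition is_prime_broadcast_center (V : finType) (R : realFieldType)
  (e : rel V) (rho : R) (w : V -> V -> R) (k : V) : Prop :=
  is_broadcast_center e rho w k /\
  (forall u : V, e k u ->
     bcast e rho w u (Tbar e u k) <= bcast e rho w k (Tbar e k u)).

Definition simple_path (V : finType) (e : rel V) (x : V) (p : seq V) (y : V)
  : Prop :=
  path e x p /\ last x p = y /\ uniq (x :: p).

Definition path_weight (V : finType) (R : realFieldType) (w : V -> V -> R)
  (x : V) (p : seq V) : R :=
  \sum_(ab <- zip (x :: p) p) w ab.1 ab.2.

(* Main.v *)
Require Import Defs.
From HB Require Import structures.
From mathcomp Require Import all_boot all_order all_algebra.
From mathcomp Require Import zify ring lra.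
Import Order.TTheory GRing.Theory Num.Theory.
Set Implicit Arguments. Unset Strict Implicit. Unset Printing Implicit Defensive.

Section Graph.
Variable V : finType.
Variable e : rel V.
Hypothesis etree : is_tree e.

Definition Rs (S : {set V}) := [rel a b | [&& e a b, a \in S & b \in S]].

Lemma e_sym : symmetric e. Proof. by case: etree. Qed.
Lemma eirr : irreflexive e. Proof. by case: etree. Qed.

Lemma Rs_sym (S : {set V}) : symmetric (Rs S).
Proof. by move=> a b /=; rewrite e_sym; case: (a \in S); case: (b \in S); rewrite ?andbF ?andbT. Qed.

Lemma reach_ind (r : rel V) (P : V -> Prop) v :
  P v -> (forall a b, connect r v a -> P a -> r a b -> P b) ->
  forall y, connect r v y -> P y.
Proof.
move=> Pv H y /connectP [p pth ->].
suff gen : forall a, connect r v a -> P a -> path r a p -> P (last a p).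
  by apply: gen => //; apply: connect0.
elim: p {pth} => [|b p IH] a ca Pa //= /andP [rab pth].
apply: IH pth; first by apply: connect_trans ca (connect1 rab).
by apply: H ca Pa rab.
Qed.
Arguments reach_ind r P v : clear implicits.

Lemma comp_mem (A : {set V}) (u v y : V) : (y \in Defs.comp e A u v) = (y \in A :\ u) && connect (Rs (A :\ u)) v y.
Proof. by rewrite inE. Qed.

Lemma reach_in (A : {set V}) (u v y : V) : v \in A :\ u -> connect (Rs (A :\ u)) v y -> y \in Defs.comp e A u v.
Proof.
move=> vin c; rewrite comp_mem c andbT.
move: c; apply: (reach_ind _ (fun y => y \in A :\ u)) => // a b _ _ /=.
by case/and3P.
Qed.

Lemma comp_mono (A B : {set V}) (u v : V) : A \subset B -> Defs.comp e A u v \subset Defs.comp e B u v.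
Proof.
move=> sAB; apply/subsetP => y; rewrite !comp_mem => /andP [yA c].
apply/andP; split.
  by move: yA; rewrite !in_setD1 => /andP [-> /(subsetP sAB)].
move: c; apply: connect_sub => a b /= /and3P [eab aA bA]; apply: connect1.
rewrite /= eab; move: aA bA; rewrite !in_setD1 => /andP [-> /(subsetP sAB) ->] /andP [-> /(subsetP sAB) ->].
by [].
Qed.

Lemma L_comp (A B : {set V}) (u v : V) : Defs.comp e A u v \subset B -> Defs.comp e A u v \subset Defs.comp e B u v.
Proof.
move=> sub; apply/subsetP => y yin.
have := yin; rewrite comp_mem => /andP [yA c].
have yB := subsetP sub y yin.
rewrite comp_mem; apply/andP; split.
  by move: yA; rewrite !in_setD1 => /andP [-> _].
move: c; apply: (reach_ind _ (fun y => connect (Rs (B :\ u)) v y)); first exact: connect0.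
move=> a b ca cb /= /and3P [eab aA bA].
apply: connect_trans cb (connect1 _) => /=.
have aC : a \in Defs.comp e A u v by rewrite comp_mem aA ca.
have bC : b \in Defs.comp e A u v by rewrite comp_mem bA (connect_trans ca (connect1 _)) //= eab aA bA.
move: aA bA; rewrite !in_setD1 eab => /andP [-> _] /andP [-> _].
by rewrite (subsetP sub _ aC) (subsetP sub _ bC).
Qed.


Lemma path_Rs (S : {set V}) a p : path (Rs S) a p -> path e a p && all (mem S) p.
Proof.
elim: p a => [|b p IH] a //= /andP [/and3P [eab _ bS] pth].
by rewrite eab bS /=; apply: IH.
Qed.

Lemma path_to_Rs (S : {set V}) a p : a \in S -> all (mem S) p -> path e a p -> path (Rs S) a p.
Proof.
elim: p a => [|b p IH] a //= aS /andP [bS allp] /andP [eab pth].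
by rewrite eab aS bS /=; apply: IH.
Qed.

Lemma simple_conn (S : {set V}) a y : connect (Rs S) a y ->
  exists p, [/\ path e a p, last a p = y, uniq (a::p) & all (mem S) p].
Proof.
case/connectP => p pth ->; case/shortenP: pth => p' pth' up' _.
case/andP: (path_Rs pth') => pe pa.
by exists p'.
Qed.

Lemma Rs_csym (S : {set V}) x y : connect (Rs S) x y = connect (Rs S) y x.
Proof. exact: (sym_connect_sym (Rs_sym S)). Qed.

Lemma no_cross a b : e a b -> forall n z q1 q2, size q1 + size q2 = n ->
  path e a q1 -> last a q1 = z -> uniq (a::q1) -> b \notin q1 ->
  path e z q2 -> last z q2 = b -> uniq (z::q2) -> a \notin q2 ->
  q1 != [::] -> False.
Proof.
move=> eab n; elim/ltn_ind: n => n IH z q1 q2 sz p1 l1 u1 nb1 p2 l2 u2 na2 ne1.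
have q2ne : q2 != [::].
  apply/negP => /eqP q2n; move: l2; rewrite q2n /= => zb.
  case: q1 ne1 l1 nb1 {p1 u1 sz} => [|c q1'] // _ /= l1; rewrite -zb -l1.
  by rewrite mem_last.
case: (boolP (has (mem q1) q2)) => [/hasP [w wq2 wq1] | hn].
  case/splitPr: wq1 sz p1 l1 u1 nb1 ne1 => q1a q1b sz p1 l1 u1 nb1 _.
  case/splitPr: wq2 sz p2 l2 u2 na2 q2ne => q2a q2b sz p2 l2 u2 na2 _.
  have wb : w != b by apply: contra nb1 => /eqP <-; rewrite mem_cat inE eqxx orbT.
  apply: (IH (size (rcons q1a w) + size q2b) _ w (rcons q1a w) q2b) => //.
  - rewrite -sz size_rcons !size_cat /=; lia.
  - move: p1; rewrite cat_path rcons_path => /andP [-> /=] /andP [-> _] //.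
  - by rewrite last_rcons.
  - move: u1; rewrite -cat_rcons -cat_cons cat_uniq.
    by case/andP.
  - apply: contra nb1; rewrite mem_rcons inE mem_cat inE => /orP [/eqP ->|->]; by rewrite ?eqxx ?orbT.
  - by move: p2; rewrite cat_path => /andP [_ /= /andP [_ ->]].
  - by move: l2; rewrite last_cat.
  - move: u2; rewrite -cat_cons cat_uniq => /and3P [_ _ ->] //.
  - by apply: contra na2; rewrite mem_cat inE => ->; rewrite !orbT.
  - by rewrite -size_eq0 size_rcons.
case: etree => _ _ _ /(_ a (rcons (q1 ++ q2) a)).
rewrite rcons_path cat_path last_cat p1 l1 p2 l2 e_sym eab last_rcons rcons_uniq.
rewrite mem_cat negb_or cat_uniq.
have na1 : a \notin q1 by case/andP: u1.
have uq1 : uniq q1 by case/andP: u1.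
have uq2 : uniq q2 by case/andP: u2.
rewrite na1 na2 uq1 uq2 hn size_rcons size_cat => /(_ isT erefl isT).
case: q1 ne1 {p1 l1 u1 nb1 sz hn na1 uq1} => // c q1 _.
by case: q2 q2ne {p2 l2 u2 na2 uq2} => // d q2 _ /=; rewrite addnS.
Qed.

Lemma Tsub_mem a b z : (z \in Tsub e a b) = (z != a) && connect (Rs (setT :\ a)) b z.
Proof. by rewrite /Tsub comp_mem in_setD1 in_setT andbT. Qed.

Lemma allS_notin (S : {set V}) p b : all (mem (S :\ b)) p -> b \notin p.
Proof. by move/allP => H; apply/negP => /H; rewrite /= in_setD1 eqxx. Qed.

Lemma T1 a b : e a b -> Tsub e a b = ~: Tsub e b a.
Proof.
move=> eab; have ab : a != b by apply: contraTneq eab => ->; rewrite eirr.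
apply/setP => z; rewrite in_setC; apply/idP/idP.
  move=> zab; apply/negP => zba.
  move: zab zba; rewrite !Tsub_mem => /andP [za c2] /andP [zb c1].
  rewrite Rs_csym in c2.
  case: (simple_conn c1) => q1 [p1 l1 u1 a1].
  case: (simple_conn c2) => q2 [p2 l2 u2 a2].
  apply: (no_cross eab (erefl _) p1 l1 u1 (allS_notin a1) p2 l2 u2 (allS_notin a2)).
  by case: q1 l1 {p1 u1 a1} => // /= l1; move: za; rewrite -l1 eqxx.
move=> nz; rewrite Tsub_mem.
case: (eqVneq z b) => [->|zb]; first by rewrite eq_sym ab connect0.
case: (eqVneq z a) => [za|za].
  by move: nz; rewrite za Tsub_mem ab connect0.
case: etree => _ _ /(_ z b) /connectP [p0 pth0 l0] _.
case: (shortenP pth0) l0 => p pth up _ l0.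
rewrite /=.
case: (boolP (a \in p)) => [ap|nap].
  case/splitPr: ap pth up l0 => p1 p2 pth up l0.
  have bp2 : b \in p2.
    move: l0; rewrite last_cat /= => l0.
    have := mem_last a p2; rewrite -l0 inE eq_sym (negbTE ab) /=.
    by [].
  exfalso; move/negP: nz; apply; rewrite Tsub_mem zb /= Rs_csym.
  have -> : a = last z (rcons p1 a) by rewrite last_rcons.
  apply/connectP; exists (rcons p1 a) => //.
  apply: path_to_Rs.
  - by rewrite in_setD1 zb in_setT.
  - apply/allP => y; rewrite mem_rcons inE => /orP [/eqP ->|yp1].
      by rewrite /= in_setD1 in_setT ab.
    rewrite /= in_setD1 in_setT andbT; apply: contraTneq yp1 => ->.
    move: up; rewrite /= cat_uniq => /andP [_ /and3P [_ /hasPn H _]].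
    by have := H b; rewrite inE bp2 orbT => /(_ isT).
  - by move: pth; rewrite cat_path rcons_path => /andP [-> /= /andP [-> _]].
rewrite Rs_csym; apply/connectP; exists p => //.
apply: path_to_Rs => //.
  by rewrite in_setD1 za in_setT.
apply/allP => y yp; rewrite /= in_setD1 in_setT andbT.
by apply: contraNneq nap => <-.
Qed.

Lemma neq_of_e a b : e a b -> a != b.
Proof. by move=> eab; apply: contraTneq eab => ->; rewrite eirr. Qed.

Lemma self_in a b : e a b -> b \in Tsub e a b.
Proof. by move=> eab; rewrite Tsub_mem eq_sym neq_of_e // connect0. Qed.

Lemma nbr_notin x v x1 : e x v -> e x x1 -> v != x1 -> v \notin Tsub e x x1.
Proof.
move=> exv exx1 vx1; rewrite (T1 exx1) in_setC negbK Tsub_mem vx1 /=.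
apply: connect1; rewrite /= exv !in_setD1 !in_setT vx1 andbT /=.
by rewrite neq_of_e // e_sym.
Qed.

Lemma Tsub_step a b c : e a b -> e b c -> a != c -> Tsub e b c \subset Tsub e a b.
Proof.
move=> eab ebc ac; apply/subsetP => z; rewrite Tsub_mem => /andP [zb cz].
have ana : a \notin Tsub e b c by apply: nbr_notin => //; rewrite e_sym.
suff : (z != a) && connect (Rs (setT :\ a)) b z by rewrite Tsub_mem.
move: cz; apply: (reach_ind _ (fun y => (y != a) && connect (Rs (setT :\ a)) b y)).
  rewrite eq_sym ac /=; apply: connect1; rewrite /= ebc !in_setD1 !in_setT (eq_sym c a) ac !andbT.
  by rewrite eq_sym neq_of_e.
move=> a' b' ca' /andP [a'a ba'] /= /and3P [ea'b' a'S b'S].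
have b'in : b' \in Tsub e b c.
  rewrite Tsub_mem; have := b'S; rewrite in_setD1 => /andP [-> _] /=.
  apply: connect_trans ca' (connect1 _); by rewrite /= ea'b' a'S b'S.
have b'a : b' != a by apply: contraNneq ana => <-.
rewrite b'a /=; apply: connect_trans ba' (connect1 _).
by rewrite /= ea'b' !in_setD1 !in_setT a'a b'a.
Qed.

Lemma comp_Tsub (A : {set V}) x x1 : Tsub e x x1 \subset A -> Defs.comp e A x x1 = Tsub e x x1.
Proof.
move=> sub; apply/eqP; rewrite eqEsubset; apply/andP; split.
  by apply: comp_mono; apply: subsetT.
by apply: L_comp.
Qed.

Lemma same_comp x y k : e x y -> x != k -> y != k -> Tbar e k x = Tbar e k y.
Proof.
move=> exy xk yk; rewrite /Tbar; congr (~: _); apply/setP => z; rewrite !Tsub_mem.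
have c : connect (Rs (setT :\ k)) x y by apply: connect1; rewrite /= exy !in_setD1 !in_setT xk yk.
congr andb; apply/idP/idP => h; first by rewrite Rs_csym in c; apply: connect_trans c h.
by apply: connect_trans c h.
Qed.

End Graph.

Local Open Scope ring_scope.

Section Lists.
Variable R : realFieldType.
Variable I : eqType.

Lemma bigmax_ge0 (r : seq I) (P : pred I) (F : I -> R) :
  0 <= \big[Num.max/0]_(i <- r | P i) F i.
Proof.
elim: r => [|a r IH]; rewrite ?big_nil ?big_cons //.
by case: (P a) => //; rewrite le_max IH orbT.
Qed.

Lemma le_bigmax_l (r : seq I) (F : I -> R) x0 i : i \in r ->
  F i <= \big[Num.max/x0]_(j <- r) F j.
Proof.
elim: r => [|a r IH] //; rewrite inE big_cons => /orP [/eqP ->|ir].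
  by rewrite le_max lexx.
by rewrite le_max IH ?orbT.
Qed.

Lemma bigmax_le_l (r : seq I) (P : pred I) (F : I -> R) c :
  0 <= c -> (forall i, P i -> F i <= c) -> \big[Num.max/0]_(i <- r | P i) F i <= c.
Proof. move=> c0 H; apply: (big_ind (fun x => x <= c)) => // x y hx hy; by rewrite ge_max hx. Qed.

Lemma bigmin_le_l (r : seq I) (F : I -> R) x0 i : i \in r ->
  \big[Num.min/x0]_(j <- r) F j <= F i.
Proof.
elim: r => [|a r IH] //; rewrite inE big_cons => /orP [/eqP ->|ir].
  by rewrite ge_min lexx.
by rewrite ge_min IH ?orbT.
Qed.

Lemma le_bigmin_l (r : seq I) (F : I -> R) x0 c :
  c <= x0 -> (forall i, i \in r -> c <= F i) -> c <= \big[Num.min/x0]_(j <- r) F j.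
Proof.
move=> c0 H; rewrite big_seq; apply: (big_ind (fun x => c <= x)) => // x y hx hy.
by rewrite le_min hx.
Qed.

Lemma bigmin_att (r : seq I) (F : I -> R) x0 :
  \big[Num.min/x0]_(j <- r) F j = x0 \/ exists2 i, i \in r & \big[Num.min/x0]_(j <- r) F j = F i.
Proof.
elim: r => [|a r IH]; first by left; rewrite big_nil.
rewrite big_cons; case: (leP (F a) (\big[Num.min/x0]_(j <- r) F j)) => h.
  by right; exists a; rewrite ?mem_head.
case: IH => [->|[i ir ->]]; first by left.
by right; exists i; rewrite // inE ir orbT.
Qed.

End Lists.

Lemma filter_nth (T : eqType) (a : pred T) (x0 : T) p i : (i < size (filter a p))%N ->
  exists j, [/\ (i <= j)%N, (j < size p)%N & nth x0 p j = nth x0 (filter a p) i].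
Proof.
elim: p i => [|y p IH] i //=; case: (a y) => /=.
  case: i => [|i] /= h; first by exists 0%N.
  by case: (IH i h) => j [h1 h2 h3]; exists j.+1.
by move=> h; case: (IH i h) => j [h1 h2 h3]; exists j.+1; split => //; apply: leqW.
Qed.

Section Bcast.
Variables (R : realFieldType) (V : finType) (e : rel V) (rho : R) (w : V -> V -> R).
Hypotheses (etree : is_tree e) (rho0 : 0 < rho) (wnn : forall u v, e u v -> 0 <= w u v).

Local Notation comp := (Defs.comp e).
Local Notation aux := (bcast_aux e rho w).
Local Notation B := (bcast e rho w).

Definition nbrs (A : {set V}) u := [seq v <- enum A | e u v].
Definition costF (F : V -> {set V} -> R) (A : {set V}) u (p : seq V) : R :=
  \big[Num.max/0]_(i < size p)
     ((i.+1)%:R * rho + w u (nth u p i) + F (nth u p i) (comp A u (nth u p i))).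

Lemma auxS n u (A : {set V}) : aux n.+1 u A =
  \big[Num.min/costF (aux n) A u (nbrs A u)]_(p <- permutations (nbrs A u)) costF (aux n) A u p.
Proof. by []. Qed.

Lemma nbrsE (A : {set V}) u v : (v \in nbrs A u) = (v \in A) && e u v.
Proof. by rewrite mem_filter mem_enum andbC. Qed.

Lemma nbrs_uniq (A : {set V}) u : uniq (nbrs A u).
Proof. exact: filter_uniq (enum_uniq _). Qed.

Lemma comp_card (A : {set V}) u v : u \in A -> (#|comp A u v| < #|A|)%N.
Proof.
move=> uA; have sub : comp A u v \subset A :\ u by apply/subsetP => y; rewrite comp_mem => /andP[].
rewrite (cardsD1 u A) uA; apply: leq_ltn_trans (subset_leq_card sub) _; by rewrite add1n.
Qed.

Lemma v_in_comp (A : {set V}) u v : v \in nbrs A u -> v \in comp A u v.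
Proof.
rewrite nbrsE => /andP [vA euv]; apply: reach_in; last exact: connect0.
by rewrite in_setD1 vA eq_sym (neq_of_e etree euv).
Qed.

Lemma costF_eq F G (A : {set V}) u p : perm_eq p (nbrs A u) ->
  (forall v, v \in nbrs A u -> F v (comp A u v) = G v (comp A u v)) ->
  costF F A u p = costF G A u p.
Proof.
move=> pp H; apply: eq_bigr => i _; rewrite H //; rewrite -(perm_mem pp); exact: mem_nth.
Qed.

Lemma fuel n m u (A : {set V}) : u \in A -> (#|A| <= n)%N -> (#|A| <= m)%N -> aux n u A = aux m u A.
Proof.
elim: n m u A => [|n IH] m u A uA hn hm; have A0 : (0 < #|A|)%N by (apply/card_gt0P; exists u).
  lia.
case: m hm => [|m] hm; first lia.
rewrite !auxS.
have E : forall p, perm_eq p (nbrs A u) -> costF (aux n) A u p = costF (aux m) A u p.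
  move=> p pp; apply: costF_eq => // v vN; apply: IH; first exact: v_in_comp.
    by have := comp_card v uA; lia.
  by have := comp_card v uA; lia.
rewrite E ?perm_refl //; apply: eq_big_seq => p; rewrite mem_permutations; exact: E.
Qed.

Lemma B_unfold u (A : {set V}) : u \in A -> B u A =
  \big[Num.min/costF B A u (nbrs A u)]_(p <- permutations (nbrs A u)) costF B A u p.
Proof.
move=> uA; have A0 : (0 < #|A|)%N by (apply/card_gt0P; exists u).
rewrite {1}/bcast; case E: #|A| A0 => [|n] // _.
rewrite auxS.
have E2 : forall p, perm_eq p (nbrs A u) -> costF (aux n) A u p = costF B A u p.
  move=> p pp; apply: costF_eq => // v vN; rewrite /bcast; apply: fuel => //.
    exact: v_in_comp.
  by have := comp_card v uA; lia.
rewrite E2 ?perm_refl //; apply: eq_big_seq => p; rewrite mem_permutations; exact: E2.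
Qed.

Lemma B_ge0 u (A : {set V}) : 0 <= B u A.
Proof.
rewrite /bcast; case: #|A| => [|n]; first exact: lexx.
rewrite auxS.
by apply: le_bigmin_l => [|p _]; apply: bigmax_ge0.
Qed.

Lemma B_le u (A : {set V}) p : u \in A -> perm_eq p (nbrs A u) -> B u A <= costF B A u p.
Proof. by move=> uA pp; rewrite B_unfold //; apply: bigmin_le_l; rewrite mem_permutations. Qed.

Lemma B_att u (A : {set V}) : u \in A -> exists2 p, perm_eq p (nbrs A u) & B u A = costF B A u p.
Proof.
move=> uA; rewrite B_unfold //.
case: (bigmin_att (permutations (nbrs A u)) (costF B A u) (costF B A u (nbrs A u))) => [->|[p pin ->]].
  by exists (nbrs A u).
by exists p; rewrite -?mem_permutations.
Qed.

Lemma term_le F (A : {set V}) u p i (h : (i < size p)%N) :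
  (i.+1)%:R * rho + w u (nth u p i) + F (nth u p i) (comp A u (nth u p i)) <= costF F A u p.
Proof.
exact: (le_bigmax_l (fun j : 'I_(size p) => (j.+1)%:R * rho + w u (nth u p j) + F (nth u p j) (comp A u (nth u p j))) 0 (mem_index_enum (Ordinal h))).
Qed.

Lemma F1 u v (A : {set V}) : u \in A -> v \in A -> e u v ->
  rho + w u v + B v (comp A u v) <= B u A.
Proof.
move=> uA vA euv; rewrite [B u A]B_unfold //.
have key : forall p, perm_eq p (nbrs A u) -> rho + w u v + B v (comp A u v) <= costF B A u p.
  move=> p pp; have vp : v \in p by rewrite (perm_mem pp) nbrsE vA euv.
  have hi : (index v p < size p)%N by rewrite index_mem.
  apply: (le_trans _ (term_le B A u hi)); rewrite nth_index // lerD2r lerD2r.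
  rewrite -{1}(mul1r rho); apply: ler_wpM2r; [exact: ltW | by rewrite ler1n].
apply: le_bigmin_l => [|p]; first exact: key.
by rewrite mem_permutations; exact: key.
Qed.

Lemma mono k : forall (A A' : {set V}) u, (#|A| <= k)%N -> u \in A' -> A' \subset A -> B u A' <= B u A.
Proof.
elim: k => [|k IH] A A' u hk uA' sub; have uA := subsetP sub u uA';
  have A0 : (0 < #|A|)%N by (apply/card_gt0P; exists u).
  lia.
case: (B_att uA) => P pP ->.
set N' := nbrs A' u; set q := [seq y <- P | y \in N'].
have qp : perm_eq q N'.
  apply: uniq_perm; first by rewrite filter_uniq // (perm_uniq pP) nbrs_uniq.
    exact: nbrs_uniq.
  move=> y; rewrite mem_filter; apply/andP/idP => [[]|yN] //; split => //.
  rewrite (perm_mem pP) nbrsE; move: yN; rewrite nbrsE => /andP [yA' ->].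
  by rewrite (subsetP sub _ yA').
apply: le_trans (B_le uA' qp) _.
apply: bigmax_le_l; first exact: bigmax_ge0.
move=> i _; case: (@filter_nth _ (fun y => y \in N') u P i (ltn_ord i)) => j [hij hj hn].
rewrite -hn; apply: (le_trans _ (term_le B A u hj)).
have yN : nth u P j \in N' by rewrite hn -(perm_mem qp); apply: mem_nth.
apply: lerD; first by apply: lerD => //; apply: ler_wpM2r; [exact: ltW | rewrite ler_nat ltnS].
apply: IH.
- by have := comp_card (nth u P j) uA; lia.
- exact: v_in_comp.
- exact: comp_mono.
Qed.

Lemma step_eq (A : {set V}) x x1 :
  x \in A -> e x x1 -> Tsub e x x1 \subset A ->
  B x (Tbar e x x1) <= w x x1 + B x1 (Tsub e x x1) ->
  B x A = rho + w x x1 + B x1 (Tsub e x x1).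
Proof.
move=> xA exx1 sub dom.
have cA : comp A x x1 = Tsub e x x1 by apply: comp_Tsub.
have x1A : x1 \in A := subsetP sub _ (self_in etree exx1).
apply/eqP; rewrite eq_le; apply/andP; split; last by rewrite -cA; apply: F1.
set Tb := Tbar e x x1.
have xTb : x \in Tb by rewrite /Tb /Tbar in_setC Tsub_mem eqxx.
case: (B_att xTb) => P pP BP.
set q := [seq y <- P | y \in A].
have x1nP : x1 \notin P by rewrite (perm_mem pP) nbrsE /Tb /Tbar in_setC self_in.
have qp : perm_eq (x1 :: q) (nbrs A x).
  apply: uniq_perm.
  - rewrite /= /q mem_filter negb_and x1nP orbT filter_uniq //.
    by rewrite (perm_uniq pP) nbrs_uniq.
  - exact: nbrs_uniq.
  - move=> y; rewrite inE mem_filter nbrsE; case: (eqVneq y x1) => [->|yx1] /=.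
      by rewrite x1A exx1.
    rewrite (perm_mem pP) nbrsE; case: (boolP (e x y)) => exy; rewrite ?andbF //.
    by rewrite /Tb /Tbar in_setC (nbr_notin etree exy exx1 yx1) !andbT.
apply: le_trans (B_le xA qp) _.
apply: bigmax_le_l.
  by apply: addr_ge0; [apply: addr_ge0; [exact: ltW | exact: wnn] | exact: B_ge0].
case=> [[|i] hi] _ /=; first by rewrite mul1r cA.
have hi' : (i < size q)%N by [].
case: (@filter_nth _ (fun y => y \in A) x P i hi') => j [hij hj hn].
move: hn; rewrite -/q => hn; rewrite -hn; set y := nth x P j.
have yN : y \in nbrs Tb x by rewrite -(perm_mem pP); apply: mem_nth.
have yA : y \in A by move: (mem_nth x hi'); rewrite -hn mem_filter => /andP [].
have exy : e x y by move: yN; rewrite nbrsE => /andP [].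
have le1 : B y (comp A x y) <= B y (comp Tb x y).
  apply: (mono (k := #|comp Tb x y|)) => //.
    by apply: v_in_comp; rewrite nbrsE yA exy.
  apply: L_comp; apply/subsetP => z zin; rewrite /Tb /Tbar in_setC; apply/negP => zT.
  move: zin; rewrite comp_mem => /andP [_ c1].
  move: zT; rewrite Tsub_mem => /andP [_ c2].
  have c3 : connect (Rs e (setT :\ x)) y z.
    move: c1; apply: connect_sub => a b /= /and3P [eab aS bS]; apply: connect1.
    by rewrite /= eab; move: aS bS; rewrite !in_setD1 !in_setT !andbT => /andP [-> _] /andP [-> _].
  have : y \in Tsub e x x1.
    rewrite Tsub_mem eq_sym (neq_of_e etree exy) /=.
    by apply: connect_trans c2 _; rewrite Rs_csym.
  by move: yN; rewrite nbrsE /Tb /Tbar in_setC => /andP [/negP].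
have le2 : (i.+2)%:R * rho <= rho + (j.+1)%:R * rho.
  have -> : (i.+2)%:R = 1 + (i.+1)%:R :> R by rewrite -natr1 addrC.
  rewrite mulrDl mul1r lerD2l; apply: ler_wpM2r; [exact: ltW | by rewrite ler_nat ltnS].
have le3 := term_le B Tb x hj.
rewrite -BP in le3.
have le4 : (i.+2)%:R * rho + w x y + B y (comp A x y) <= rho + B x Tb.
  have h5 : rho + ((j.+1)%:R * rho + w x y + B y (comp Tb x y)) <= rho + B x Tb by rewrite lerD2l.
  apply: le_trans h5; rewrite !addrA; apply: lerD le1; exact: lerD le2 (lexx _).
apply: le_trans le4 _; rewrite -addrA lerD2l; exact: dom.
Qed.

Lemma f_le a b c : e a b -> e b c -> a != c -> B c (Tsub e b c) <= B b (Tsub e a b).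
Proof.
move=> eab ebc ac.
have sub := Tsub_step etree eab ebc ac.
have bin := self_in etree eab.
have cin := subsetP sub _ (self_in etree ebc).
have := F1 bin cin ebc; rewrite (comp_Tsub sub) => h.
apply: le_trans h; rewrite -{1}[B c _]add0r lerD2r; apply: addr_ge0; [exact: ltW | exact: wnn].
Qed.

Variable kappa : V.
Hypothesis kp : is_prime_broadcast_center e rho w kappa.

Lemma desc q : forall a b, path e a (b :: q) -> last b q = kappa -> uniq (a :: b :: q) ->
  exists u, [/\ e u kappa, B a (Tsub e b a) <= B u (Tsub e kappa u) &
                B kappa (Tsub e u kappa) <= B b (Tsub e a b)].
Proof.
elim: q => [|c q IH] a b /=.
  by move=> /andP [eab _] <- _; exists a.
move=> /andP [eab pth] l un.
have un' : uniq (b :: c :: q) by case/andP: un.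
have ac : a != c by apply: contraTneq un => ->; rewrite /= !inE eqxx !orbT.
have [u [euk h1 h2]] := IH b c pth l un'.
have ebc : e b c by case/andP: pth.
exists u; split => //.
  apply: (le_trans _ h1); apply: f_le; [by rewrite (e_sym etree) | by rewrite (e_sym etree) | by rewrite eq_sym].
apply: (le_trans h2); exact: f_le.
Qed.

Lemma prime_ineq u : e u kappa -> B u (Tsub e kappa u) <= B kappa (Tsub e u kappa).
Proof.
move=> euk; have eku : e kappa u by rewrite (e_sym etree).
have := (proj2 kp) u eku; rewrite /Tbar -(T1 etree eku).
by rewrite -(T1 etree euk).
Qed.

Lemma dom q a b : path e a (b :: q) -> last b q = kappa -> uniq (a :: b :: q) ->
  B a (Tbar e a b) <= w a b + B b (Tsub e a b).
Proof.
move=> pth l un; have eab : e a b by case/andP: pth.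
have eba : e b a by rewrite (e_sym etree).
rewrite /Tbar -(T1 etree eba).
have [u [euk h1 h2]] := desc pth l un.
apply: le_trans h1 _; apply: le_trans (prime_ineq euk) _; apply: le_trans h2 _.
by rewrite lerDr wnn.
Qed.

Lemma chain p : forall x (A : {set V}), path e x p -> last x p = kappa -> uniq (x :: p) ->
  x != kappa -> x \in A -> Tsub e x (head kappa p) \subset A ->
  B x A = (size p)%:R * rho + path_weight w x p + B kappa (Tbar e kappa x).
Proof.
elim: p => [|y p IH] x A /=.
  by move=> _ l _ xk; rewrite l eqxx in xk.
move=> /andP [exy pth] l un xk xA sub.
have pth' : path e x (y :: p) by rewrite /= exy pth.
rewrite (step_eq xA exy sub (dom pth' l un)).
case: p IH pth l un {sub pth'} => [|z p] IH pth l un.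
  rewrite /= in l; subst y.
  by rewrite /path_weight /= big_cons big_nil addr0 /Tbar -(T1 etree exy) mul1r.
have eyz : e y z by case/andP: pth.
have un' : uniq (y :: z :: p) by case/andP: un.
have xz : x != z by apply: contraTneq un => ->; rewrite /= !inE eqxx !orbT.
have yk : y != kappa.
  apply/eqP => yk; have : y \in z :: p by rewrite yk -l /= mem_last.
  by move: un'; rewrite /= => /andP [/negP].
rewrite (IH y (Tsub e x y) pth l un' yk (self_in etree exy) (Tsub_step etree exy eyz xz)).
rewrite (same_comp etree exy xk yk).
rewrite /path_weight /= !big_cons /= -!natr1 !mulrDl !mul1r.
ring.
Qed.

End Bcast.

Unset Implicit Arguments.
Set Strict Implicit.

Theorem lemma4 (R : realFieldType) (V : finType) (e : rel V) (rho : R)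
  (wl wu w : V -> V -> R) (kappa : V) :
  is_tree e -> 0 < rho -> edge_intervals e wl wu -> scenario e wl wu w ->
  is_prime_broadcast_center e rho w kappa ->
  forall (x : V) (p : seq V), x != kappa -> simple_path e x p kappa ->
  bcast e rho w x [set: V] =
    (size p)%:R * rho + path_weight w x p + bcast e rho w kappa (Tbar e kappa x).
Proof.
move=> et r0 [_ [_ ei]] [_ sc] kp x p xk [pth [l un]].
have wnn : forall u v, e u v -> 0 <= w u v.
  move=> u v euv; case/andP: (ei u v euv) => h1 _; case/andP: (sc u v euv) => h2 _.
  exact: le_trans h1 h2.
apply: (chain et r0 wnn kp pth l un xk) => //.
Qed.
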